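(* Let $V$ be a finite set of nails and let $T$ be a commutator tree over $V$ whose leaves are words $t_1, \dots, t_m \in F(V)$ with $t_i$ solving a specification $g_i$ on $V$, and let $f = g_1 \vee \cdots \vee g_m$. Then (the value of) $T$ solves $f$ if and only if there is no internal node $u$ of $T$ and no $S \subseteq V$ with $f(S) = \mathsf{hang}$ such that the value of $u$ satisfies $(\mathrm{val}(u))|_S = 0$. In particular, $T$ solves $f$ if, for every $S$ with $f(S) = \mathsf{hang}$ and every internal node $u$, the specifications $\phi_1, \phi_2$ solved by the values of the two children of $u$ separate above $S$, i.e.\ there is $S'$ with $S \subseteq S' \subseteq V$ and $\phi_1(S') \neq \phi_2(S')$.
   Context: Words are elements of the free group $F(V)$ on a finite set $V$ of nails, written additively ($+$ group operation, $-$ inverse, $0$ identity). The commutator is $[a,b] = a + b - a - b$. A commutator tree is a finite rooted binary tree whose leaves are labelled by words; the value of a leaf is its label, the value of an internal node with left child $u_1$ and right child $u_2$ is $[\mathrm{val}(u_1), \mathrm{val}(u_2)]$, and the value of the tree is the value of its root. For $S \subseteq V$, $h|_S$ is the image of $h$ under the homomorphism killing the generators in $S$. A specification on $V$ is a monotone function $f: 2^V \to \{\mathsf{hang}, \mathsf{fall}\}$ with $f(V) = \mathsf{fall}$, where $\mathsf{hang} < \mathsf{fall}$ and monotone means $S \subseteq S' \Rightarrow f(S) \le f(S')$. A word $h$ solves $f$ if for every $S \subseteq V$: $h|_S = 0 \iff f(S) = \mathsf{fall}$. $\vee$ is the pointwise $\max$ with respect to $\mathsf{hang} < \mathsf{fall}$.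 Every word in $F(V)$ solves the specification $S \mapsto (\mathsf{fall}$ if $h|_S=0$, else $\mathsf{hang})$. *)

(* Defs.v *)
(* Free group F(V) on a finite set V of nails, represented by
   words (sequences of signed letters) modulo free reduction. *)
From mathcomp Require Import all_boot.
Set Implicit Arguments. Unset Strict Implicit. Unset Printing Implicit Defensive.

Section FreeGroup.
Variable V : finType.

(* a letter (v, true) is the generator v, (v, false) is -v *)
Definition letter := (V * bool)%type.
Definition word := seq letter.

Definition inv_letter (x : letter) : letter := (x.1, ~~ x.2).

Definition reduce (w : word) : word :=
  foldr (fun x acc => match acc with
                      | y :: r => if y == inv_letter x then r else x :: acc
                      | [::] => [:: x]
                      end) [::] w.

Definition is_zero (w : word) : bool := reduce w == [::].

Definition wadd (a b : word) : word := a ++ b.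
Definition wopp (a : word) : word := rev (map inv_letter a).
Definition comm (a b : word) : word := wadd a (wadd b (wadd (wopp a) (wopp b))).

(* h|_S : image of h under the homomorphism killing the generators in S *)
Definition restrict (S : {set V}) (w : word) : word :=
  filter (fun x => x.1 \notin S) w.

End FreeGroup.

Inductive outcome := hang | fall.

Definition le_outcome (a b : outcome) : bool :=
  match a, b with fall, hang => false | _, _ => true end.

Definition join_outcome (a b : outcome) : outcome :=
  match a with fall => fall | hang => b end.

Definition spec_fun (V : finType) := {set V} -> outcome.

Definition is_spec (V : finType) (f : spec_fun V) : Prop :=
  (forall S S' : {set V}, S \subset S' -> le_outcome (f S) (f S')) /\
  f [set: V] = fall.

Definition spec_join (V : finType) (f g : spec_fun V) : spec_fun V :=
  fun S => join_outcome (f S) (g S).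

Definition solves (V : finType) (h : word V) (f : spec_fun V) : Prop :=
  forall S : {set V}, is_zero (restrict S h) <-> f S = fall.

Definition spec_of (V : finType) (h : word V) : spec_fun V :=
  fun S => if is_zero (restrict S h) then fall else hang.

Inductive ctree (A : Type) := Leaf of A | Node of ctree A & ctree A.
Arguments Leaf {A}. Arguments Node {A}.

Fixpoint leaves A (T : ctree A) : seq A :=
  match T with Leaf a => [:: a] | Node l r => leaves l ++ leaves r end.

Fixpoint subtree A (u T : ctree A) : Prop :=
  u = T \/ match T with Leaf _ => False | Node l r => subtree u l \/ subtree u r end.

Fixpoint ct_val (V : finType) (B : Type) (T : ctree (word V * B)) : word V :=
  match T with
  | Leaf a => a.1
  | Node l r => comm (ct_val l) (ct_val r)
  end.

Definition leaf_join (V : finType) (T : ctree (word V * spec_fun V)) : spec_fun V :=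
  fun S => foldr (fun p acc => join_outcome (p.2 S) acc) hang (leaves T).

(* Main.v *)
Require Import Defs.
From mathcomp Require Import all_boot zify.
Set Implicit Arguments. Unset Strict Implicit. Unset Printing Implicit Defensive.

Fixpoint pw (T : Type) (z : seq T) (n : nat) : seq T :=
  if n is n'.+1 then z ++ pw z n' else [::].

Lemma pw_add (T : Type) (z : seq T) m n : pw z (m + n) = pw z m ++ pw z n.
Proof. by elim: m => //= m ->; rewrite catA. Qed.

Lemma LS (T : Type) (u v : seq T) : u ++ v = v ++ u ->
  exists z m n, u = pw z m /\ v = pw z n.
Proof.
move: {2}(size u + size v) (leqnn (size u + size v)) => N.
elim: N u v => [|N IH] u v.
  case: u => [|? ?] //; case: v => [|? ?] // _ _; by exists [::], 0, 0.
move=> Hs E.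
wlog Huv : u v Hs E / size u <= size v => [Hw|].
  case: (leqP (size u) (size v)) => H; first exact: Hw.
  have [z [m [n [E1 E2]]]] := Hw v u ltac:(by rewrite addnC) (esym E) (ltnW H).
  by exists z, n, m.
case: u Hs E Huv => [|x u'] Hs E Huv.
  by exists v, 0, 1; rewrite /= cats0.
set u := x :: u' in Hs E Huv *.
have Hu : u = take (size u) v.
  by have := congr1 (take (size u)) E; rewrite takel_cat // takel_cat // take_size.
have Hv : v = u ++ drop (size u) v by rewrite {1}Hu cat_take_drop.
set v' := drop (size u) v in Hv.
have E' : u ++ v' = v' ++ u.
  have := congr1 (drop (size u)) E; rewrite drop_size_cat //.
  by rewrite {2}Hv -catA drop_size_cat // -Hv.
have Hs' : size u + size v' <= N.
  move: Hs; rewrite Hv size_cat /u /=; lia.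
have [z [m [n [E1 E2]]]] := IH u v' Hs' E'.
by exists z, m, (m + n); rewrite Hv pw_add -E1 -E2.
Qed.

Section FG.
Variable V : finType.
Implicit Types (x y : letter V) (w u v s t g c a b z : word V).

Definition step x (acc : word V) : word V :=
  match acc with y :: r => if y == inv_letter x then r else x :: acc
  | [::] => [:: x] end.
Definition act w s := foldr step s w.
Definition ne x y := y != inv_letter x.
Definition red w := sorted ne w.
Definition cr c := if c is x :: c' then ne (last x c') x else true.

Lemma reduceE w : reduce w = act w [::]. Proof. by []. Qed.
Lemma reduce_cons x w : reduce (x :: w) = step x (reduce w). Proof. by []. Qed.
Lemma act_cat u v s : act (u ++ v) s = act u (act v s).
Proof. by rewrite /act foldr_cat. Qed.
Lemma reduce_cat u v : reduce (u ++ v) = act u (reduce v).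
Proof. by rewrite !reduceE act_cat. Qed.

Lemma inv_letterK x : inv_letter (inv_letter x) = x.
Proof. by case: x => a b; rewrite /inv_letter /= negbK. Qed.
Lemma inv_neq x : (inv_letter x == x) = false.
Proof. by case: x => a b; rewrite /inv_letter xpair_eqE eqxx /=; case: b. Qed.

Lemma step_red x s : red s -> red (step x s).
Proof.
case: s => [|y r] //=; case: ifP => Hy.
  by rewrite /red /= => /path_sorted.
by rewrite /red /= => ->; rewrite /ne Hy.
Qed.

Lemma step_inv x s : red s -> step (inv_letter x) (step x s) = s.
Proof.
case: s => [|y r] /=; first by rewrite inv_letterK eqxx.
case: ifP => [/eqP -> | Hy].
  case: r => [|z r] //=; rewrite /red /= => /andP [H _].
  by rewrite /ne in H; rewrite (negbTE H).
by rewrite /step inv_letterK eqxx.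
Qed.

Lemma step_inv' x s : red s -> step x (step (inv_letter x) s) = s.
Proof. by move=> Hs; have := step_inv (inv_letter x) Hs; rewrite inv_letterK. Qed.

Lemma act_red w s : red s -> red (act w s).
Proof. by elim: w => //= x w IH Hs; apply: step_red; apply: IH. Qed.
Lemma reduce_red w : red (reduce w).
Proof. by rewrite reduceE; apply: act_red. Qed.

Lemma act_reduce w s : red s -> act w s = act (reduce w) s.
Proof.
elim: w s => // x w IH s Hs; change (act (x :: w) s) with (step x (act w s)).
rewrite IH // reduce_cons.
case E: (reduce w) => [|y q] //=.
case: ifP => [/eqP Ey| _] //=.
by rewrite Ey step_inv' // act_red.
Qed.

Lemma reduce_id w : red w -> reduce w = w.
Proof.
elim: w => // x w IH H.
rewrite reduce_cons IH; last exact: path_sorted H.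
case: w H {IH} => [|y r] //= /andP [Hne _].
by rewrite /ne in Hne; rewrite (negbTE Hne).
Qed.

Lemma reduce_size w : size (reduce w) <= size w /\
  (size (reduce w) = size w -> reduce w = w).
Proof.
elim: w => [|x w [IH1 IH2]] //.
rewrite reduce_cons; case E: (reduce w) => [|y q]; rewrite E in IH1 IH2.
  split=> //= -[] /esym/size0nil ->; done.
rewrite /= in IH1 IH2 *; case: ifP => _ /=.
  split; [lia | move=> H; lia].
split; first lia.
by case=> H; rewrite IH2.
Qed.

Lemma reduce_eq_size w : size (reduce w) = size w -> red w.
Proof. by move=> H; rewrite -(proj2 (reduce_size w) H); apply: reduce_red. Qed.

Lemma woppK w : wopp (wopp w) = w.
Proof.
rewrite /wopp map_rev revK -map_comp.
rewrite (@eq_map _ _ _ id) ?map_id // => x /=; exact: inv_letterK.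
Qed.

Lemma wopp_cons x w : wopp (x :: w) = wopp w ++ [:: inv_letter x].
Proof. by rewrite /wopp /= rev_cons cats1. Qed.
Lemma wopp_rcons x w : wopp (rcons w x) = inv_letter x :: wopp w.
Proof. by rewrite /wopp map_rcons rev_rcons. Qed.
Lemma wopp_cat u v : wopp (u ++ v) = wopp v ++ wopp u.
Proof. by rewrite /wopp map_cat rev_cat. Qed.

Lemma act_oppK w s : red s -> act (wopp w) (act w s) = s.
Proof.
elim: w s => // x w IH s Hs; change (act (x :: w) s) with (step x (act w s)).
by rewrite wopp_cons act_cat /= step_inv ?act_red // IH.
Qed.

Lemma act_oppK' w s : red s -> act w (act (wopp w) s) = s.
Proof. by move=> Hs; have := act_oppK (wopp w) Hs; rewrite woppK. Qed.

Lemma zero_act w : reduce w = [::] -> forall s, red s -> act w s = s.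
Proof. by move=> H s Hs; rewrite act_reduce // H. Qed.

Lemma act_fix w t : red t -> act w t = t -> reduce w = [::].
Proof.
move=> Ht H.
have E : act t (act (wopp t) [::]) = [::] by rewrite act_oppK'.
rewrite reduceE -{1}E -act_cat act_reduce ?act_red // reduce_cat reduce_id // H.
by rewrite E.
Qed.

Lemma zero_wopp w : reduce w = [::] -> reduce (wopp w) = [::].
Proof.
move=> H; rewrite reduceE -{1}(zero_act H (s := [::])) //.
by rewrite act_oppK.
Qed.

Lemma zero_woppE w : reduce (wopp w) = [::] -> reduce w = [::].
Proof. by move=> H; rewrite -(woppK w); apply: zero_wopp. Qed.

Lemma CONJ g u : reduce (g ++ u ++ wopp g) = [::] -> reduce u = [::].
Proof.
move=> H; apply: (@act_fix _ (act (wopp g) [::])); first exact: act_red.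
move: H; rewrite reduceE !act_cat.
move/(congr1 (act (wopp g))); rewrite act_oppK ?act_red // => ->.
Qed.

Lemma comm_zero_l a b : reduce a = [::] -> reduce (comm a b) = [::].
Proof.
move=> Ha; have Ha' := zero_wopp Ha.
rewrite reduceE /comm /wadd !act_cat (zero_act Ha') ?act_red //.
by rewrite (zero_act Ha) ?act_red // act_oppK'.
Qed.

Lemma comm_zero_r a b : reduce b = [::] -> reduce (comm a b) = [::].
Proof.
move=> Hb; have Hb' := zero_wopp Hb.
rewrite reduceE /comm /wadd !act_cat (zero_act Hb') //.
by rewrite (zero_act Hb) ?act_red // act_oppK'.
Qed.

Definition commute u v := forall s, red s -> act u (act v s) = act v (act u s).

Lemma comm_act a b : reduce (comm a b) = [::] -> commute a b.
Proof.
move=> H t Ht.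
have E := zero_act H (act_red b (act_red a Ht)).
rewrite /comm /wadd !act_cat in E.
by rewrite act_oppK ?act_red // act_oppK // in E.
Qed.

Lemma restrict_cat S u v : restrict S (u ++ v) = restrict S u ++ restrict S v.
Proof. exact: filter_cat. Qed.
Lemma restrict_wopp S u : restrict S (wopp u) = wopp (restrict S u).
Proof. by rewrite /restrict /wopp filter_rev filter_map. Qed.
Lemma restrict_comm S a b : restrict S (comm a b) = comm (restrict S a) (restrict S b).
Proof. by rewrite /comm /wadd !restrict_cat !restrict_wopp. Qed.
Lemma restrict_pw S z n : restrict S (pw z n) = pw (restrict S z) n.
Proof. by elim: n => //= n IH; rewrite restrict_cat IH. Qed.

Lemma RRstep S x r : reduce (restrict S (x :: r)) = reduce (restrict S (step x r)).
Proof.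
case: r => [|y r] //; rewrite [step x _]/=; case: ifP => [/eqP -> | _] //.
have -> : x :: inv_letter x :: r = [:: x; inv_letter x] ++ r by [].
rewrite restrict_cat reduce_cat.
have : restrict S [:: x; inv_letter x] = [::] \/
       restrict S [:: x; inv_letter x] = [:: x; inv_letter x].
  by rewrite /restrict /=; case: (x.1 \notin S); [right|left].
by case=> -> //=; rewrite step_inv' // reduce_red.
Qed.

Lemma RR S w : reduce (restrict S w) = reduce (restrict S (reduce w)).
Proof.
elim: w => // x w IH.
have -> : x :: w = [:: x] ++ w by [].
rewrite restrict_cat reduce_cat IH -reduce_cat -restrict_cat /=.
by rewrite RRstep.
Qed.

Lemma restrictK (S S' : {set V}) w : S \subset S' -> restrict S' (restrict S w) = restrict S' w.
Proof.
move=> Hsub; rewrite /restrict -filter_predI; apply: eq_filter => x /=.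
case: (boolP (x.1 \in S')) => //= H'.
apply/negP => H; move/subsetP: Hsub => /(_ _ H); rewrite (negbTE H').
done.
Qed.


Lemma red_catE u v d : u != [::] -> v != [::] ->
  red (u ++ v) = [&& red u, red v & ne (last d u) (head d v)].
Proof.
case: u => [|a u] // _; case: v => [|b v] // _.
rewrite /red /= cat_path /=.
by case: (path ne a u); case: (ne (last a u) b); case: (path ne b v).
Qed.

Lemma wopp_nil w : (wopp w == [::]) = (w == [::]).
Proof. by case: w => // x w; rewrite wopp_cons; case: (wopp w). Qed.

Lemma wopp_last x w d : last d (wopp (x :: w)) = inv_letter x.
Proof. by rewrite wopp_cons cats1 last_rcons. Qed.

Lemma wopp_head x w d : head d (wopp (x :: w)) = inv_letter (last x w).
Proof.
case/lastP: w => [|w y]; first by [].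
by rewrite last_rcons -rcons_cons wopp_rcons.
Qed.

Lemma ne_inv x y : ne (inv_letter x) (inv_letter y) = ne y x.
Proof.
case: x => a b; case: y => c d; rewrite /ne /inv_letter /= !xpair_eqE negbK.
by rewrite [c == a]eq_sym; case: b; case: d; case: (a == c).
Qed.

Lemma wopp_red w : red w -> red (wopp w).
Proof.
elim: w => // x w IH H.
have Hw : red w by exact: path_sorted H.
case: w H Hw IH => [|y w] H Hw IH //.
rewrite wopp_cons (red_catE x) ?wopp_nil //.
rewrite (IH Hw) wopp_last /= ne_inv.
by move: H; rewrite /red /= => /andP [].
Qed.

Lemma pw_red c m : red c -> cr c -> red (pw c m).
Proof.
case: c => [|x c] Hc Hcr; first by elim: m.
elim: m => // m IH.
change (red ((x :: c) ++ pw (x :: c) m)).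
rewrite /red /= cat_path (Hc : path ne x c) /=.
case: m IH => // m IH.
rewrite [pw _ _.+1]/= /= (Hcr : ne (last x c) x); exact: IH.
Qed.

Lemma decomp w : red w -> exists g c, w = g ++ c ++ wopp g /\ red c /\ cr c.
Proof.
move: {2}(size w) (leqnn (size w)) => N.
elim: N w => [|N IH] w.
  by case: w => // _ _; exists [::], [::].
case: w => [|x w] Hs Hw; first by exists [::], [::].
case Hcr: (cr (x :: w)).
  by exists [::], (x :: w); rewrite /= cats0.
case/lastP: w Hs Hw Hcr => [|m y] Hs Hw Hcr.
  by rewrite /cr /= /ne eq_sym inv_neq in Hcr.
rewrite /cr last_rcons /ne in Hcr.
move/negbFE/eqP: Hcr => Ex.
have Hm : red m.
  by move: Hw; rewrite /red /= rcons_path => /andP [/path_sorted].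
have [g [c [Em [Hc1 Hc2]]]] := IH m ltac:(by move: Hs; rewrite /= size_rcons; lia) Hm.
exists (x :: g), c; split => //.
by rewrite wopp_cons Ex inv_letterK Em /= -cats1 -!catA.
Qed.

Lemma act_pw u k s : red s -> act (pw u k) s = iter k (act u) s.
Proof. by move=> Hs; elim: k => //= k <-; rewrite act_cat. Qed.



Lemma act_pw_reduce u k s : red s -> act (pw u k) s = act (pw (reduce u) k) s.
Proof.
move=> Hs; elim: k => //= k IH.
by rewrite !act_cat IH act_reduce // act_red.
Qed.

Lemma act_pw_conj g d k s : red s ->
  act (pw (g ++ d ++ wopp g) k) s = act g (act (pw d k) (act (wopp g) s)).
Proof.
move=> Hs; elim: k => /=; first by rewrite act_oppK'.
move=> k IH; rewrite !act_cat IH act_oppK // act_red //.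
exact: act_red.
Qed.

Lemma pw_zero w n : reduce w = [::] -> reduce (pw w n) = [::].
Proof.
move=> H; rewrite reduceE; elim: n => //= n IH.
by rewrite act_cat IH zero_act.
Qed.

Lemma torsion w m : 0 < m -> reduce (pw w m) = [::] -> reduce w = [::].
Proof.
move=> Hm H.
have [g [d [EW [Hd1 Hd2]]]] := decomp (reduce_red w).
have E1 : act g (act (pw d m) (act (wopp g) [::])) = [::].
  by rewrite -act_pw_conj // -EW -act_pw_reduce // -reduceE.
have E2 : act (pw d m) (act (wopp g) [::]) = act (wopp g) [::].
  by have := congr1 (act (wopp g)) E1; rewrite act_oppK // act_red // act_red.
have Z := act_fix (act_red _ (erefl true : red [::])) E2.
clear E1 E2; case: d EW Hd1 Hd2 Z => [|x d] EW Hd1 Hd2 Z.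
  by rewrite -(reduce_id (reduce_red w)) EW reduce_cat reduceE act_oppK'.
clear H; case: m Hm Z => // m _.
by rewrite reduce_id ?pw_red.
Qed.

Lemma K c (y : word V) : red c -> cr c -> c != [::] -> red y -> commute c y ->
  c ++ y = y ++ c \/ c ++ wopp y = wopp y ++ c.
Proof.
move=> Hc Hcr Hc0 Hy C.
have Hgen : forall v, red v -> commute c v -> reduce (c ++ v) = reduce (v ++ c).
  move=> v Hv Cv; rewrite !reduce_cat !reduce_id //.
  by rewrite -{1}(reduce_id Hv) -{2}(reduce_id Hc) !reduceE Cv.
have Cy' : commute c (wopp y).
  move=> s Hs.
  rewrite -{2}(act_oppK' y Hs) C ?act_red // act_oppK //.
  by apply: act_red; apply: act_red.
have E := Hgen y Hy C.
have E' := Hgen _ (wopp_red Hy) Cy'.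
case: y Hy C Cy' E E' => [|y0 y] Hy C Cy' E E'; first by left; rewrite cats0.
case: c Hc Hcr Hc0 C Cy' E E' Hgen => [|x c] // Hc Hcr _ C Cy' E E' Hgen.
case Hcy: (red ((x :: c) ++ y0 :: y)); case Hyc: (red ((y0 :: y) ++ x :: c)).
- by left; rewrite -(reduce_id Hcy) -(reduce_id Hyc).
- exfalso; move: Hyc; rewrite (reduce_eq_size (w := (y0 :: y) ++ x :: c)) //.
  by rewrite -E reduce_id // !size_cat addnC.
- exfalso; move: Hcy; rewrite (reduce_eq_size (w := (x :: c) ++ y0 :: y)) //.
  by rewrite E reduce_id // !size_cat addnC.
right.
move: Hcy Hyc; rewrite !(red_catE x) // Hc Hy /=.
rewrite /ne => /negbFE/eqP Ey0 /negbFE/eqP Ex.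
have Hw := wopp_red Hy.
have Hc' : red (x :: c) by [].
have R1 : red ((x :: c) ++ wopp (y0 :: y)).
  rewrite (red_catE x) ?wopp_nil // Hw Hc' /= wopp_head -Ex.
  exact: Hcr.
have R2 : red (wopp (y0 :: y) ++ (x :: c)).
  rewrite (red_catE x) ?wopp_nil // Hw Hc' /=.
  by rewrite wopp_last Ey0 /ne inv_letterK.
by move: E'; rewrite (reduce_id R1) (reduce_id R2).
Qed.

Lemma FG (S' : {set V}) a b : commute a b -> reduce a != [::] ->
  reduce (restrict S' a) = [::] -> reduce (restrict S' b) = [::].
Proof.
move=> Cab Ha Hra.
have HX := reduce_red a.
have [g [c [EX [Hc1 Hc2]]]] := decomp HX.
have actX s : red s -> act a s = act g (act c (act (wopp g) s)).
  by move=> Hs; rewrite act_reduce // EX !act_cat.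
have actc s : red s -> act c s = act (wopp g) (act a (act g s)).
  by move=> Hs; rewrite actX ?act_red // act_oppK // ?act_red // act_oppK.
have Hc0 : c != [::].
  apply: contra Ha => /eqP c0.
  by rewrite -(reduce_id HX) EX c0 /= reduce_cat reduceE act_oppK'.
set y' := reduce (wopp g ++ b ++ g).
have acty s : red s -> act y' s = act (wopp g) (act b (act g s)).
  by move=> Hs; rewrite /y' -act_reduce // !act_cat.
have Ccy : commute c y'.
  move=> s Hs.
  rewrite acty // actc ?act_red // actc // acty ?act_red //.
  by rewrite !act_oppK' ?act_red // Cab ?act_red.
have [E|E] := K Hc1 Hc2 Hc0 (reduce_red _) Ccy.
- have [z [m [n [Ec Ev]]]] := LS E.
  have Hm : 0 < m by case: m Ec Hc0 => // ->.
  have Hrc : reduce (restrict S' c) = [::].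
    apply: (@CONJ (restrict S' g)).
    by rewrite -restrict_wopp -!restrict_cat -EX -RR.
  rewrite Ec restrict_pw in Hrc.
  have Hz := torsion Hm Hrc.
  have Hy : reduce (restrict S' y') = [::] by rewrite /y' Ev restrict_pw pw_zero.
  rewrite /y' -RR !restrict_cat restrict_wopp in Hy.
  apply: (@CONJ (wopp (restrict S' g))).
  by rewrite woppK.
- have [z [m [n [Ec Ev]]]] := LS E.
  have Hm : 0 < m by case: m Ec Hc0 => // ->.
  have Hrc : reduce (restrict S' c) = [::].
    apply: (@CONJ (restrict S' g)).
    by rewrite -restrict_wopp -!restrict_cat -EX -RR.
  rewrite Ec restrict_pw in Hrc.
  have Hz := torsion Hm Hrc.
  have Hy : reduce (restrict S' (wopp y')) = [::] by rewrite /y' Ev restrict_pw pw_zero.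
  rewrite restrict_wopp in Hy; have {Hy} Hy := zero_woppE Hy.
  rewrite /y' -RR !restrict_cat restrict_wopp in Hy.
  apply: (@CONJ (wopp (restrict S' g))).
  by rewrite woppK.
Qed.

End FG.


Section Tree.
Variable V : finType.
Implicit Types (T l r u : ctree (word V * spec_fun V)).

Lemma join_hang o : join_outcome o hang = o. Proof. by case: o. Qed.

Lemma foldr_join (s : seq (word V * spec_fun V)) z S :
  foldr (fun p acc => join_outcome (p.2 S) acc) z s =
  join_outcome (foldr (fun p acc => join_outcome (p.2 S) acc) hang s) z.
Proof. by elim: s => //= p s ->; case: (p.2 S). Qed.

Lemma leaf_join_node l r S :
  leaf_join (Node l r) S = join_outcome (leaf_join l S) (leaf_join r S).
Proof. by rewrite /leaf_join /= foldr_cat foldr_join. Qed.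

Lemma zero_up S u T : subtree u T -> reduce (restrict S (ct_val u)) = [::] ->
  reduce (restrict S (ct_val T)) = [::].
Proof.
elim: T => [p|l IHl r IHr] /=.
  by case=> // ->.
case=> [-> //|[H|H]] Hz; rewrite restrict_comm.
  by apply: comm_zero_l; apply: IHl.
by apply: comm_zero_r; apply: IHr.
Qed.

Lemma fall_zero T S : (forall p, subtree (Leaf p) T -> is_spec p.2 /\ solves p.1 p.2) ->
  leaf_join T S = fall -> reduce (restrict S (ct_val T)) = [::].
Proof.
elim: T => [p|l IHl r IHr] Hyp.
  rewrite /leaf_join /= join_hang => Hf.
  have [_ Hs] := Hyp p (or_introl erefl).
  by apply/eqP; apply (proj2 (Hs S)).
rewrite leaf_join_node; change (ct_val (Node l r)) with (comm (ct_val l) (ct_val r)); rewrite restrict_comm.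
case El: (leaf_join l S) => /= Hr.
  exact: comm_zero_r (IHr (fun p Hp => Hyp p (or_intror (or_intror Hp))) Hr).
exact: comm_zero_l (IHl (fun p Hp => Hyp p (or_intror (or_introl Hp))) El).
Qed.

Lemma leaf_fall T p S : subtree (Leaf p) T -> p.2 S = fall -> leaf_join T S = fall.
Proof.
elim: T => [q|l IHl r IHr] /=.
  by case=> // -[<-] H; rewrite /leaf_join /= H.
case=> [//|[H|H]] Hp; rewrite leaf_join_node.
  by rewrite IHl.
by rewrite IHr //; case: (leaf_join l S).
Qed.

Lemma subtree_refl u : subtree u u.
Proof. by case: u => [p|l r]; left. Qed.

Lemma subtree_node l r T : subtree (Node l r) T -> subtree l T /\ subtree r T.
Proof.
elim: T => [p|l' IHl r' IHr]; first by move=> /= [] //.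
move=> [E|[H|H]].
- case: E => -> ->; split => /=; right; [left|right]; exact: subtree_refl.
- by have [H1 H2] := IHl H; split => /=; right; left.
- by have [H1 H2] := IHr H; split => /=; right; right.
Qed.

End Tree.

Theorem theorem1 (V : finType) (T : ctree (word V * spec_fun V)) :
  (forall p, subtree (Leaf p) T -> is_spec p.2 /\ solves p.1 p.2) ->
  let f := leaf_join T in
  ((solves (ct_val T) f <->
     ~ (exists (l r : ctree (word V * spec_fun V)) (S : {set V}),
          subtree (Node l r) T /\ f S = hang /\
          is_zero (restrict S (ct_val (Node l r)))))
   /\
   ((forall (S : {set V}) (l r : ctree (word V * spec_fun V)),
       f S = hang -> subtree (Node l r) T ->
       exists S' : {set V}, S \subset S' /\
         spec_of (ct_val l) S' <> spec_of (ct_val r) S') ->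
    solves (ct_val T) f)).
Proof.
move=> Hyp; rewrite /=.
have Part1 : solves (ct_val T) (leaf_join T) <->
     ~ (exists (l r : ctree (word V * spec_fun V)) (S : {set V}),
          subtree (Node l r) T /\ leaf_join T S = hang /\
          is_zero (restrict S (ct_val (Node l r)))).
  split.
    move=> Hs [l [r [S [Hsub [Hf Hz]]]]].
    have := zero_up Hsub (eqP Hz) => /eqP Hz'.
    by have := proj1 (Hs S) Hz'; rewrite Hf.
  move=> Hno S; split.
    move=> Hz; case Ef: (leaf_join T S) => //; exfalso.
    case: T Hyp Hno Ef Hz => [p|l r] Hyp Hno Ef Hz.
      have [_ Hs] := Hyp p (or_introl erefl).
      have := proj1 (Hs S) Hz.
      by rewrite /leaf_join /= join_hang in Ef; rewrite Ef.
    by apply: Hno; exists l, r, S; split; [left|split].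
  by move=> Hf; apply/eqP; apply: fall_zero.
split => // Hsep.
apply/Part1 => -[l [r [S [Hsub [Hf Hz]]]]].
have Claim : forall t, subtree t T -> ~ is_zero (restrict S (ct_val t)).
  elim=> [p|l' IHl r' IHr] Ht Hzt.
    have [_ Hs] := Hyp p Ht.
    have := leaf_fall Ht (proj1 (Hs S) Hzt).
    by rewrite Hf.
  have [Hl Hr] := subtree_node Ht.
  have [S' [Hss Hne]] := Hsep S l' r' Hf Ht.
  move: Hzt; rewrite /= restrict_comm => /eqP Hzt.
  have Cab := comm_act Hzt.
  move: Hne; rewrite /spec_of.
  case El: (is_zero (restrict S' (ct_val l'))); case Er: (is_zero (restrict S' (ct_val r'))) => // _.
  - move/negP: Er; apply; apply/eqP.
    rewrite -(restrictK _ Hss).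
    apply: (FG Cab); first by apply/negP => /IHl; apply.
    by rewrite restrictK //; apply/eqP.
  - move/negP: El; apply; apply/eqP.
    rewrite -(restrictK _ Hss).
    have Cba : commute (restrict S (ct_val r')) (restrict S (ct_val l')).
      by move=> s Hs; rewrite Cab.
    apply: (FG Cba); first by apply/negP => /IHr; apply.
    by rewrite restrictK //; apply/eqP.
exact: (Claim _ Hsub Hz).
Qed.
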